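(* Fix $k\ge1$ and let $P(z)=P^{(k)}(q,t,u;z)=\sum_{n\ge0}\sum_{\pi\in\mathcal{Q}^k_n}q^{\operatorname{asc}(\pi)}t^{\operatorname{des}(\pi)}u^{\operatorname{plat}(\pi)}\frac{z^n}{n!}$. Then $P$ satisfies the differential equation $$P'(z)=(P(z)-1+q)(P(z)-1+t)(P(z)-1+u)^{k-1}$$ (derivative with respect to $z$), with initial condition $P(0)=1$.
   Context: $\mathcal{Q}^k_n$ ($k$-Stirling permutations) is the set of permutations $\pi$ of the multiset $\{1^k,\dots,n^k\}$ (each of $1,\dots,n$ appearing $k$ times) avoiding the pattern $212$, i.e. there are no indices $i<j<\ell$ with $\pi_i=\pi_\ell>\pi_j$; $\mathcal{Q}^k_0$ consists of the empty sequence. For a sequence $\pi_1\cdots\pi_r$: $i\in\{1,\dots,r\}$ is a descent if $\pi_i>\pi_{i+1}$ or $i=r$; $i\in\{0,\dots,r-1\}$ is an ascent if $i=0$ or $\pi_i<\pi_{i+1}$; $i\in\{1,\dots,r-1\}$ is a plateau if $\pi_i=\pi_{i+1}$; $\operatorname{des},\operatorname{asc},\operatorname{plat}$ count these. *)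

(* Defs.v *)
From mathcomp Require Import all_boot all_algebra.
Set Implicit Arguments. Unset Strict Implicit. Unset Printing Implicit Defensive.
Import GRing.Theory.
Local Open Scope ring_scope.

Definition stir_multiset (k n : nat) : seq nat :=
  flatten [seq nseq k i | i <- iota 1 n].

Definition avoids212 (s : seq nat) : bool :=
  all (fun i => all (fun j => all (fun l =>
     ~~ [&& (i < j)%N, (j < l)%N, nth 0 s i == nth 0 s l & (nth 0 s j < nth 0 s i)%N])
     (iota 0 (size s))) (iota 0 (size s))) (iota 0 (size s)).

(* k-Stirling permutations of order n: duplicate-free list of all
   permutations of the multiset avoiding 212. *)
Definition stirling_perms (k n : nat) : seq (seq nat) :=
  [seq s <- permutations (stir_multiset k n) | avoids212 s].

(* 1-indexed entry pi_i = nth 0 s (i-1). *)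
Definition ent (s : seq nat) (i : nat) : nat := nth 0 s i.-1.

Definition des (s : seq nat) : nat :=
  count (fun i => (i == size s) || (ent s i.+1 < ent s i)%N) (iota 1 (size s)).
Definition asc (s : seq nat) : nat :=
  count (fun i => (i == 0%N) || (ent s i < ent s i.+1)%N) (iota 0 (size s)).
Definition plat (s : seq nat) : nat :=
  count (fun i => ent s i == ent s i.+1) (iota 1 (size s).-1).

(* Exponential generating functions over a commutative ring R, represented by
   their coefficient sequences: f represents sum_n f n z^n / n!. *)
Definition egf (R : comNzRingType) := nat -> R.

Definition egf_mul (R : comNzRingType) (f g : egf R) : egf R :=
  fun n => \sum_(i < n.+1) ('C(n, i))%:R * f i * g (n - i)%N.
Definition egf_one (R : comNzRingType) : egf R := fun n => if n is 0%N then 1 else 0.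
Definition egf_const (R : comNzRingType) (c : R) : egf R :=
  fun n => if n is 0%N then c else 0.
Definition egf_add (R : comNzRingType) (f g : egf R) : egf R := fun n => f n + g n.
Definition egf_pow (R : comNzRingType) (f : egf R) (m : nat) : egf R :=
  iter m (egf_mul f) (egf_one R).
Definition egf_deriv (R : comNzRingType) (f : egf R) : egf R := fun n => f n.+1.

Definition stirP (R : comNzRingType) (k : nat) (q t u : R) : egf R :=
  fun n => \sum_(s <- stirling_perms k n) q ^+ asc s * t ^+ des s * u ^+ plat s.

(* Main.v *)
Require Import Defs.
From mathcomp Require Import all_boot all_algebra.
From mathcomp Require Import zify ring.
From Stdlib Require Import FunctionalExtensionality.
Set Implicit Arguments. Unset Strict Implicit. Unset Printing Implicit Defensive.
Import GRing.Theory.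

Section PartA.
Local Open Scope ring_scope.

Fixpoint cnt (P : nat -> nat -> bool) (x : nat) (s : seq nat) : nat :=
  if s is y :: s' then (P x y + cnt P y s')%N else 0%N.

Lemma cnt_cat P x s1 s2 : cnt P x (s1 ++ s2) = (cnt P x s1 + cnt P (last x s1) s2)%N.
Proof. elim: s1 x => [|y s1 IH] x /=; first by []. by rewrite IH addnA. Qed.

Lemma count_iotaS (P : pred nat) m n :
  count P (iota m.+1 n) = count (fun i => P i.+1) (iota m n).
Proof. elim: n m => [|n IH] m /=; first by []. by rewrite IH. Qed.

Lemma cnt_nth P x s :
  count (fun i => P (nth 0%N (x :: s) i) (nth 0%N (x :: s) i.+1)) (iota 0 (size s)) = cnt P x s.
Proof.
elim: s x => [|y s IH] x //=.
by rewrite count_iotaS IH.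
Qed.

Lemma nth_rcons0 (s : seq nat) i : nth 0%N (s ++ [:: 0%N]) i = nth 0%N s i.
Proof.
rewrite nth_cat; case: (ltnP i (size s)) => // h.
rewrite [RHS]nth_default //; case: (subn i (size s)) => [|j] //=; by rewrite nth_nil.
Qed.

Lemma asc_cnt z s : all (fun v => 0 < v)%N (z :: s) ->
  asc (z :: s) = cnt ltn 0 ((z :: s) ++ [:: 0%N]).
Proof.
move=> hpos; rewrite /asc /= count_iotaS cnt_cat /=.
have hz : (0 < z)%N by case/andP: hpos.
have hl : (0 < last z s)%N by apply: (allP hpos); apply: mem_last.
by rewrite hz !addn0 -(cnt_nth ltn z s).
Qed.

Lemma des_cnt z s : all (fun v => 0 < v)%N (z :: s) ->
  des (z :: s) = cnt (fun a b => b < a)%N 0 ((z :: s) ++ [:: 0%N]).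
Proof.
move=> hpos; rewrite /des (count_iotaS _ 0).
have -> : cnt (fun a b => b < a)%N 0 ((z :: s) ++ [:: 0%N]) =
   cnt (fun a b => b < a)%N z (s ++ [:: 0%N]) by [].
rewrite -(cnt_nth (fun a b => b < a)%N z (s ++ [:: 0%N])) size_cat addn1.
apply: eq_in_count => i; rewrite mem_iota add0n => /andP[_ hi].
rewrite /ent -cat_cons !nth_rcons0 succnK.
case: eqP => //= hi'.
rewrite [nth _ s i]nth_default; last by case: hi' => ->.
symmetry; exact: (allP hpos _ (mem_nth 0%N hi)).
Qed.

Lemma plat_cnt z s : all (fun v => 0 < v)%N (z :: s) ->
  plat (z :: s) = cnt (fun a b => a == b) 0 ((z :: s) ++ [:: 0%N]).
Proof.
move=> hpos; rewrite /plat /= count_iotaS cnt_cat /=.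
have hz : (0 < z)%N by case/andP: hpos.
have hl : (0 < last z s)%N by apply: (allP hpos); apply: mem_last.
have -> : (0 == z) = false by apply/negbTE; rewrite eq_sym -lt0n.
have -> : (last z s == 0%N) = false by apply/negbTE; rewrite -lt0n.
rewrite add0n addn0 -(cnt_nth _ z s).
by rewrite addn0.
Qed.

End PartA.

Section PartB.
Local Open Scope ring_scope.

Section W.
Variables (R : comNzRingType) (q t u : R).

Definition f (x y : nat) : R := if (x < y)%N then q else if (y < x)%N then t else u.

Fixpoint pw (x : nat) (s : seq nat) : R :=
  if s is y :: s' then f x y * pw y s' else 1.

Lemma pw_cat x s1 s2 : pw x (s1 ++ s2) = pw x s1 * pw (last x s1) s2.
Proof. elim: s1 x => [|y s1 IH] x /=; first by rewrite mul1r. by rewrite IH mulrA. Qed.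

Lemma pwE x s : pw x s = q ^+ cnt ltn x s * t ^+ cnt (fun a b => b < a)%N x s *
   u ^+ cnt (fun a b => a == b) x s.
Proof.
elim: s x => [|y s IH] x /=; first by rewrite !expr0 !mul1r.
rewrite IH /f; case: (ltngtP x y) => h; rewrite ?add1n ?add0n exprS; ring.
Qed.

Definition w (s : seq nat) : R := q ^+ asc s * t ^+ des s * u ^+ plat s.

Lemma w_pw z s : all (fun v => 0 < v)%N (z :: s) -> w (z :: s) = pw 0 ((z :: s) ++ [:: 0%N]).
Proof. by move=> h; rewrite pwE /w asc_cnt // des_cnt // plat_cnt. Qed.

Lemma pw_block x y z s : (x < z)%N -> (y < last z s)%N ->
  pw x ((z :: s) ++ [:: y]) = q * pw z s * t.
Proof.
move=> hx hy; rewrite cat_cons /= pw_cat /= /f hx mulr1 mulrA.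
by rewrite ltnNge (ltnW hy) /= hy.
Qed.

End W.

End PartB.

Section PartC.

Lemma av212P s : reflect (forall i j l, i < j -> j < l -> l < size s ->
   nth 0 s i = nth 0 s l -> nth 0 s i <= nth 0 s j) (avoids212 s).
Proof.
apply: (iffP idP) => H.
- move=> i j l hij hjl hl he.
  have hi : i \in iota 0 (size s) by rewrite mem_iota add0n; lia.
  have hj : j \in iota 0 (size s) by rewrite mem_iota add0n; lia.
  have hl' : l \in iota 0 (size s) by rewrite mem_iota add0n; lia.
  move/allP/(_ i hi)/allP/(_ j hj)/allP/(_ l hl'): H.
  by rewrite hij hjl he eqxx /= -leqNgt.
- apply/allP => i; rewrite mem_iota => /andP[_ hi].
  apply/allP => j _; apply/allP => l; rewrite mem_iota add0n => /andP[_ hl].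
  apply/negP => /and4P[hij hjl /eqP he hlt].
  by have := H i j l hij hjl hl he; rewrite leqNgt hlt.
Qed.

Section Cat.
Variables (a : nat) (sg s' : seq nat).
Let L := sg ++ a :: s'.
Lemma nthL i : i < size sg -> nth 0 L i = nth 0 sg i.
Proof. by move=> h; rewrite /L nth_cat h. Qed.
Lemma nthM : nth 0 L (size sg) = a.
Proof. by rewrite /L nth_cat ltnn subnn. Qed.
Lemma nthR i : nth 0 L (size sg + i.+1) = nth 0 s' i.
Proof. by rewrite /L nth_cat ltnNge leq_addr /= addKn. Qed.
Lemma sizeL : size L = size sg + (size s').+1.
Proof. by rewrite /L size_cat. Qed.
End Cat.

Lemma idx3 p i : [\/ i < p, i = p | exists i', i = p + i'.+1].
Proof.
case: (ltngtP i p) => h; [by constructor 1| |by constructor 2].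
by constructor 3; exists (i - p - 1); lia.
Qed.

Lemma av_cat a sg s' : all (fun v => a < v) sg -> all (fun v => a <= v) s' ->
  avoids212 (sg ++ a :: s') =
  [&& avoids212 sg, avoids212 s' & ~~ has (fun v => v \in sg) s'].
Proof.
move=> hsg hs'; apply/idP/idP.
- move/av212P => H; apply/and3P; split.
  + apply/av212P => i j l hij hjl hl he.
    have hi : i < size sg by lia.
    have hj : j < size sg by lia.
    have := H i j l hij hjl; rewrite sizeL !nthL //; apply => //; lia.
  + apply/av212P => i j l hij hjl hl he.
    have := H (size sg + i.+1) (size sg + j.+1) (size sg + l.+1).
    rewrite sizeL !nthR; apply => //; lia.
  + apply/hasPn => v vs'; apply/negP => vsg.
    have hi : index v sg < size sg by rewrite index_mem.
    have hl : index v s' < size s' by rewrite index_mem.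
    have h1 : size sg < size sg + (index v s').+1 by lia.
    have h2 : size sg + (index v s').+1 < size (sg ++ a :: s') by rewrite sizeL; lia.
    have := H _ _ _ hi h1 h2.
    rewrite nthL // nthM nthR !nth_index // => /(_ erefl).
    by rewrite leqNgt (allP hsg v vsg).
- case/and3P => /av212P Hsg /av212P Hs' hd.
  apply/av212P => i j l hij hjl; rewrite sizeL => hl he.
  case: (idx3 (size sg) l) => [hl'|hl'|[l' hl']].
  + have hi : i < size sg by lia.
    have hj : j < size sg by lia.
    rewrite !nthL // in he *; exact: Hsg hij hjl hl' he.
  + subst l; have hi : i < size sg by lia.
    rewrite nthM nthL // in he.
    by have := allP hsg _ (mem_nth 0 hi); rewrite he ltnn.
  + subst l; rewrite nthR in he.
    have hl'' : l' < size s' by lia.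
    case: (idx3 (size sg) i) => [hi|hi|[i' hi]].
    * rewrite nthL // in he.
      have := hasPn hd _ (mem_nth 0 hl''); rewrite -he mem_nth //.
    * subst i; rewrite nthM.
      have [j' hj'] : exists j', j = size sg + j'.+1 by exists (j - size sg - 1); lia.
      subst j.
      rewrite nthR; apply: (allP hs'); apply: mem_nth.
      by apply: ltn_trans hl''; rewrite ltn_add2l ltnS in hjl.
    * subst i.
      have [j' hj'] : exists j', j = size sg + j'.+1 by exists (j - size sg - 1); lia.
      subst j; rewrite !nthR in he *; apply: (Hs' i' j' l') => //; lia.
Qed.

End PartC.

Section PartD.
Local Open Scope ring_scope.

Fixpoint splits (T : seq nat) : seq (seq nat * seq nat) :=
  if T is x :: T' then
    [seq (x :: p.1, p.2) | p <- splits T'] ++ [seq (p.1, x :: p.2) | p <- splits T']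
  else [:: ([::], [::])].

Lemma splits_count T p : p \in splits T -> forall P, count P T = (count P p.1 + count P p.2)%N.
Proof.
elim: T p => [|x T IH] p /=; first by rewrite inE => /eqP -> P.
rewrite mem_cat => /orP[] /mapP[p' hp' ->] P /=; rewrite (IH p' hp'); [by rewrite addnA | by rewrite addnCA].
Qed.

Lemma splits_subseq T p : p \in splits T -> subseq p.1 T /\ subseq p.2 T.
Proof.
elim: T p => [|x T IH] p /=; first by rewrite inE => /eqP ->.
rewrite mem_cat => /orP[] /mapP[p' hp' ->] /=; have [h1 h2] := IH p' hp'.
- by rewrite eqxx; split => //; apply: subseq_trans h2 (subseq_cons _ _).
- by rewrite eqxx; split => //; apply: subseq_trans h1 (subseq_cons _ _).
Qed.

Lemma splits_filter T (P : pred nat) : (filter P T, filter (predC P) T) \in splits T.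
Proof.
elim: T => [|x T IH] //=.
rewrite mem_cat; case: (P x) => /=.
- by rewrite (map_f (fun p => (x :: p.1, p.2)) IH).
- by rewrite (map_f (fun p => (p.1, x :: p.2)) IH) orbT.
Qed.

Lemma splits_uniq T : uniq T -> uniq (splits T).
Proof.
elim: T => [|x T IH] //= /andP[xT uT].
rewrite cat_uniq !map_inj_uniq ?IH //; last by move=> [a b] [c d] /= [-> ->].
- rewrite andbT; apply/hasPn => z /mapP[p hp ->]; apply/negP => /mapP[p' hp' []] h1 h2.
  have [h _] := splits_subseq hp.
  by move: xT; rewrite (mem_subseq h) // h1 mem_head.
- by move=> [a b] [c d] /= [-> ->].
Qed.

Lemma splits_eq T p p' : sorted ltn T -> p \in splits T -> p' \in splits T ->
  p.1 =i p'.1 -> p = p'.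
Proof.
move=> sT hp hp' e1.
have [s1 s2] := splits_subseq hp; have [s1' s2'] := splits_subseq hp'.
have st := subseq_sorted ltn_trans.
have uT : uniq T by apply: (sorted_uniq ltn_trans ltnn).
have h1 : p.1 = p'.1 by apply: (irr_sorted_eq ltn_trans ltnn) => //; apply: st sT.
have h2 : p.2 = p'.2.
  apply: (irr_sorted_eq ltn_trans ltnn); try by apply: st sT.
  move=> v; have c := splits_count hp (pred1 v); have c' := splits_count hp' (pred1 v).
  have u1 : uniq p.2 by apply: subseq_uniq uT.
  have u2 : uniq p'.2 by apply: subseq_uniq uT.
  have e : count_mem v p.2 = count_mem v p'.2.
    rewrite c' h1 in c; exact: esym (addnI c).
  move: e; rewrite !count_uniq_mem //.
  by case: (v \in p.2); case: (v \in p'.2).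
by case: p p' h1 h2 {hp hp' e1 s1 s2 s1' s2'} => [a b] [c d] /= -> ->.
Qed.

Section Alg.
Variable R : comNzRingType.

Definition Sp2 n (F : nat -> nat -> R) : R :=
  \sum_(i < n.+1) ('C(n, i))%:R * F i (n - i)%N.

Lemma Sp20 F : Sp2 0 F = F 0%N 0%N.
Proof. by rewrite /Sp2 big_ord1 bin0 mul1r. Qed.

Lemma Sp2D n F G : Sp2 n (fun i j => F i j + G i j) = Sp2 n F + Sp2 n G.
Proof. by rewrite /Sp2 -big_split; apply: eq_bigr => i _; rewrite mulrDr. Qed.

Lemma Sp2Z n c F : c * Sp2 n F = Sp2 n (fun i j => c * F i j).
Proof. by rewrite /Sp2 mulr_sumr; apply: eq_bigr => i _; rewrite mulrCA. Qed.

Lemma Sp2_ext n F G : (forall i j, F i j = G i j) -> Sp2 n F = Sp2 n G.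
Proof. by move=> h; apply: eq_bigr => i _; rewrite h. Qed.

Lemma Sp2S n F : Sp2 n.+1 F = Sp2 n (fun i j => F i.+1 j) + Sp2 n (fun i j => F i j.+1).
Proof.
rewrite /Sp2 big_ord_recl bin0 mul1r subn0.
have -> : \sum_(i < n.+1) ('C(n.+1, bump 0 i))%:R * F (bump 0 i) (n.+1 - bump 0 i)%N =
   \sum_(i < n.+1) ('C(n, i))%:R * F i.+1 (n - i)%N +
   \sum_(i < n.+1) ('C(n, i.+1))%:R * F i.+1 (n - i)%N.
  rewrite -big_split; apply: eq_bigr => i _ /=.
  by rewrite /bump /= add1n binS subSS natrD mulrDl addrC.
rewrite addrCA; congr (_ + _).
rewrite big_ord_recr /= bin_small // mul0r addr0.
rewrite [in RHS]big_ord_recl bin0 subn0 mul1r; congr (_ + _).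
apply: eq_bigr => i _ /=; rewrite /bump /= add1n.
by rewrite subnSK.
Qed.

Lemma Sp2_LC n (F : nat -> nat -> nat -> R) :
  Sp2 n (fun i j => Sp2 j (fun a b => F i a b)) =
  Sp2 n (fun i j => Sp2 j (fun a b => F a i b)).
Proof.
elim: n F => [|n IH] F; first by rewrite !Sp20.
rewrite !Sp2S.
rewrite (@Sp2_ext n (fun i j => Sp2 j.+1 (fun a b => F i a b))
   (fun i j => Sp2 j (fun a b => F i a.+1 b) + Sp2 j (fun a b => F i a b.+1))); last first.
  by move=> i j; rewrite Sp2S.
rewrite (@Sp2_ext n (fun i j => Sp2 j.+1 (fun a b => F a i b))
   (fun i j => Sp2 j (fun a b => F a.+1 i b) + Sp2 j (fun a b => F a i b.+1))); last first.
  by move=> i j; rewrite Sp2S.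
rewrite !Sp2D.
rewrite (IH (fun i a b => F i.+1 a b)) (IH (fun i a b => F i a.+1 b)) (IH (fun i a b => F i a b.+1)).
by rewrite addrCA addrA.
Qed.

Lemma egf_mulE (f g : egf R) n : egf_mul f g n = Sp2 n (fun i j => f i * g j).
Proof. by rewrite /egf_mul /Sp2; apply: eq_bigr => i _; rewrite mulrA. Qed.

Lemma egf_mul_lcomm (f g h : egf R) : egf_mul f (egf_mul g h) = egf_mul g (egf_mul f h).
Proof.
apply: functional_extensionality => n; rewrite !egf_mulE.
rewrite (@Sp2_ext n _ (fun i j => Sp2 j (fun a b => f i * (g a * h b)))); last first.
  by move=> i j; rewrite egf_mulE Sp2Z.
rewrite [RHS](@Sp2_ext n _ (fun i j => Sp2 j (fun a b => g i * (f a * h b)))); last first.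
  by move=> i j; rewrite egf_mulE Sp2Z.
rewrite Sp2_LC; apply: Sp2_ext => i j; apply: Sp2_ext => a b; by rewrite mulrCA.
Qed.

Lemma egf_mul1 (f : egf R) : egf_mul f (egf_one R) = f.
Proof.
apply: functional_extensionality => n; rewrite /egf_mul big_ord_recr /= binn subnn mulr1 mul1r.
rewrite big1 ?add0r // => i _; rewrite /egf_one.
have : (0 < n - i)%N by rewrite subn_gt0.
by case: (n - i)%N => [|m] // _; rewrite mulr0.
Qed.

Lemma iter_mul_comm (U T : egf R) j :
  iter j (egf_mul U) T = egf_mul T (egf_pow U j).
Proof.
elim: j => [|j IH] /=; first by rewrite egf_mul1.
by rewrite IH egf_mul_lcomm.
Qed.

Lemma splits_sum T (F : nat -> nat -> R) :
  \sum_(p <- splits T) F (size p.1) (size p.2) = Sp2 (size T) F.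
Proof.
elim: T F => [|x T IH] F /=; first by rewrite big_cons big_nil addr0 Sp20.
rewrite big_cat !big_map /= Sp2S.
by rewrite (IH (fun i j => F i.+1 j)) (IH (fun i j => F i j.+1)).
Qed.

End Alg.

End PartD.

Section PartE.
Local Open Scope ring_scope.

Lemma uniq_pairs_dep (A B : eqType) (P : seq A) (t : A -> seq B) :
  uniq P -> (forall x, uniq (t x)) -> uniq [seq (x, y) | x <- P, y <- t x].
Proof.
elim: P => //= x P IH /andP[xP uP] ut.
rewrite cat_uniq map_inj_uniq ?ut ?IH //=; last by move=> y1 y2 [].
rewrite andbT; apply/hasPn => z /allpairsPdep [x' [y' [hx' _ ->]]].
by apply/negP => /mapP [y _ [e _]]; move: xP; rewrite -e hx'.
Qed.

Lemma cat_a_inj (a : nat) s1 s2 s3 s4 : a \notin s1 -> a \notin s3 ->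
  s1 ++ a :: s2 = s3 ++ a :: s4 -> s1 = s3 /\ s2 = s4.
Proof.
move=> h1 h3 e.
have hi : size s1 = size s3.
  have := congr1 (index a) e; rewrite !index_cat (negbTE h1) (negbTE h3) /= eqxx !addn0.
  by [].
have e1 : s1 = s3.
  by have := congr1 (take (size s1)) e; rewrite take_size_cat // hi take_size_cat.
subst s3; split => //; have := congr1 (drop (size s1)) e.
by rewrite !drop_size_cat // => -[].
Qed.

Lemma count_pos (v : nat) s : (0 < count_mem v s)%N = (v \in s).
Proof. by rewrite -has_count has_pred1. Qed.

Lemma permC (s1 s2 : seq nat) : (forall v, count_mem v s1 = count_mem v s2) -> perm_eq s1 s2.
Proof. by move=> h; apply/allP => v _; rewrite /= h eqxx. Qed.

Section Comb.
Variables (R : comNzRingType) (k : nat) (hk : (0 < k)%N).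

Definition mult (T : seq nat) : seq nat := flatten [seq nseq k i | i <- T].
Definition Good (a m : nat) (T : seq nat) :=
  [seq s <- permutations (nseq m a ++ mult T) | avoids212 s].
Definition SP (T : seq nat) := [seq s <- permutations (mult T) | avoids212 s].

Lemma count_mult (P : pred nat) T : count P (mult T) = (k * count P T)%N.
Proof.
elim: T => [|x T IH] /=; first by rewrite muln0.
by rewrite count_cat IH count_nseq mulnDr mulnC.
Qed.

Lemma mem_mult v T : (v \in mult T) = (v \in T).
Proof. by rewrite -!count_pos count_mult muln_gt0 hk. Qed.

Lemma mem_Good s a m T : (s \in Good a m T) = perm_eq s (nseq m a ++ mult T) && avoids212 s.
Proof. by rewrite mem_filter mem_permutations andbC. Qed.

Lemma mem_SP s T : (s \in SP T) = perm_eq s (mult T) && avoids212 s.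
Proof. by rewrite mem_filter mem_permutations andbC. Qed.

Lemma uniq_Good a m T : uniq (Good a m T).
Proof. exact: filter_uniq (permutations_uniq _). Qed.

Lemma uniq_SP T : uniq (SP T).
Proof. exact: filter_uniq (permutations_uniq _). Qed.

Lemma vals_SP sg B : sg \in SP B -> forall v, (v \in sg) = (v \in B).
Proof. by rewrite mem_SP => /andP[h _] v; rewrite (perm_mem h) mem_mult. Qed.

Lemma vals_Good s a m B : s \in Good a m B -> forall v, v \in s -> v = a \/ v \in B.
Proof.
rewrite mem_Good => /andP[h _] v; rewrite (perm_mem h) mem_cat mem_nseq mem_mult.
by case/orP => [/andP[_ /eqP ->]|]; [left|right].
Qed.


Lemma decomp_mem a m C s : sorted ltn C -> all (fun v => a < v)%N C ->
  (s \in Good a m.+1 C) =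
  (s \in [seq (fun x : (seq nat * seq nat) * (seq nat * seq nat) => x.2.1 ++ a :: x.2.2) z |
          z <- [seq (p, st) | p <- splits C, st <- [seq (sg, s') | sg <- SP p.1, s' <- Good a m p.2]]]).
Proof.
move=> sC aC; have uC : uniq C by apply: (sorted_uniq ltn_trans ltnn).
have Cgt : forall v, v \in C -> (a < v)%N by move=> v; apply: (allP aC).
apply/idP/idP.
- rewrite mem_Good => /andP[hperm hav].
  have cs : forall v, count_mem v s = ((a == v) * m.+1 + k * (v \in C))%N.
    by move=> v; rewrite (permP hperm) count_cat count_nseq count_mult count_uniq_mem //= mulnC.
  have aC' : a \notin C by apply/negP => /Cgt; rewrite ltnn.
  have ains : a \in s by rewrite -count_pos cs eqxx.
  set i := index a s; set sg := take i s; set s' := drop i.+1 s.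
  have es : s = sg ++ a :: s'.
    by rewrite -{1}(cat_take_drop i s) (drop_nth 0) ?index_mem // nth_index.
  have ansg : a \notin sg.
    by rewrite -has_pred1 /sg /i has_take ?has_pred1 // ltnn.
  have vs : forall v, v \in s -> v = a \/ v \in C.
    move=> v; rewrite -count_pos cs; case: eqP => [->|_]; first by left.
    by rewrite mul0n add0n muln_gt0 hk /=; case: (v \in C) => //; right.
  have hsg : all (fun v => a < v)%N sg.
    apply/allP => v vsg; have := vs v (mem_take vsg); case => [e|]; last exact: Cgt.
    by move: ansg; rewrite -e vsg.
  have hs' : all (fun v => a <= v)%N s'.
    apply/allP => v vs'; case: (vs v (mem_drop vs')) => [->//|/Cgt /ltnW //].
  move: hav; rewrite es av_cat // => /and3P[av1 av2 hd].
  have cs2 : forall v, count_mem v s = (count_mem v sg + (a == v) + count_mem v s')%N.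
    by move=> v; rewrite {1}es count_cat /= addnA.
  set P : pred nat := fun v => v \in sg.
  apply/mapP; exists ((filter P C, filter (predC P) C), (sg, s')); last by [].
  apply/allpairsPdep; exists (filter P C, filter (predC P) C), (sg, s'); split => //.
    exact: splits_filter.
  apply/allpairsPdep; exists sg, s'; split => //=.
  + rewrite mem_SP av1 andbT; apply: permC => v.
    have cf : forall Q : pred nat, count_mem v (filter Q C) = (v \in filter Q C) by move=> Q; rewrite count_uniq_mem ?filter_uniq.
    rewrite count_mult cf mem_filter /P.
    case vsg: (v \in sg) => /=.
    * have va : (a == v) = false by apply/negP => /eqP e; move: ansg; rewrite e vsg.
      have vs'0 : count_mem v s' = 0%N by apply/count_memPn; apply/negP => vs'; by have := hasPn hd v vs'; rewrite /= vsg.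
      have := cs2 v; rewrite cs va vs'0 mul0n add0n !addn0.
      have -> : v \in C by case: (vs v); [rewrite es mem_cat vsg | move=> e; move: va; rewrite e eqxx | ].
      by rewrite muln1 => <-.
    * by rewrite muln0; apply/count_memPn; rewrite vsg.
  + rewrite mem_Good av2 andbT; apply: permC => v.
    have cf : forall Q : pred nat, count_mem v (filter Q C) = (v \in filter Q C) by move=> Q; rewrite count_uniq_mem ?filter_uniq.
    rewrite count_cat count_nseq count_mult cf mem_filter /P /=.
    have := cs2 v; rewrite cs.
    case: (eqVneq a v) => [<-|nav].
    * have -> : count_mem a sg = 0%N by apply/count_memPn.
      rewrite (negbTE aC') /= => h; clear -h; lia.
    * rewrite /=.
      case vsg: (v \in sg) => /=.
      - have vs'0 : count_mem v s' = 0%N by apply/count_memPn; apply/negP => vs'; by have := hasPn hd v vs'; rewrite /= vsg.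
        by rewrite vs'0 muln0.
      - have -> : count_mem v sg = 0%N by apply/count_memPn; rewrite vsg.
        by rewrite add0n.
- case/mapP => x /allpairsPdep [p [st [hp /allpairsPdep [sg [s' [hsg hs' ->]]] ->]]] -> /=.
  rewrite mem_Good; have [sub1 sub2] := splits_subseq hp.
  have gt1 : forall v, v \in sg -> (a < v)%N.
    by move=> v; rewrite (vals_SP hsg) => /(mem_subseq sub1) /Cgt.
  have ge2 : forall v, v \in s' -> (a <= v)%N.
    move=> v /(vals_Good hs') [->//|/(mem_subseq sub2) /Cgt /ltnW //].
  apply/andP; split.
  + apply: permC => v.
    move: (hsg) (hs'); rewrite mem_SP mem_Good => /andP[h1 _] /andP[h2 _].
    rewrite count_cat /= (permP h1) (permP h2) !count_cat !count_nseq !count_mult.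
    rewrite (splits_count hp) /=; lia.
  + rewrite av_cat; last 2 first.
    * by apply/allP.
    * by apply/allP.
    move: (hsg) (hs'); rewrite mem_SP mem_Good => /andP[_ ->] /andP[_ ->] /=.
    apply/hasPn => v vs'; apply/negP => vsg.
    have v1 : v \in p.1 by rewrite -(vals_SP hsg).
    case: (vals_Good hs' vs') => [e|v2]; first by have := gt1 v vsg; rewrite e ltnn.
    have := splits_count hp (pred1 v); rewrite count_uniq_mem //.
    have c1 : (0 < count_mem v p.1)%N by rewrite count_pos.
    have c2 : (0 < count_mem v p.2)%N by rewrite count_pos.
    have : ((v \in C) <= 1)%N by case: (v \in C).
    move=> h3 h4; have := leq_add c1 c2; rewrite -h4; move: h3; by case: (v \in C).
Qed.

End Comb.

End PartE.

Section PartF.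
Local Open Scope ring_scope.

Section Main.
Variables (R : comNzRingType) (k : nat) (hk : (0 < k)%N).

Lemma notin_SP a B sg : all (fun v => a < v)%N B -> sg \in SP k B -> a \notin sg.
Proof.
move=> aB hsg; apply/negP; rewrite (vals_SP hk hsg) => /(allP aB); by rewrite ltnn.
Qed.

Lemma decomp a m C (phi : seq nat -> R) : sorted ltn C -> all (fun v => a < v)%N C ->
  \sum_(s <- Good k a m.+1 C) phi s =
  \sum_(p <- splits C) \sum_(sg <- SP k p.1) \sum_(s' <- Good k a m p.2) phi (sg ++ a :: s').
Proof.
move=> sC aC; have uC : uniq C by apply: (sorted_uniq ltn_trans ltnn).
have aP : forall p, p \in splits C -> all (fun v => a < v)%N p.1.
  move=> p hp; have [h _] := splits_subseq hp; apply/allP => v /(mem_subseq h) /(allP aC) //.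
set L := [seq (p, st) | p <- splits C, st <- [seq (sg, s') | sg <- SP k p.1, s' <- Good k a m p.2]].
set g := fun x : (seq nat * seq nat) * (seq nat * seq nat) => x.2.1 ++ a :: x.2.2.
have UL : uniq (map g L).
  rewrite map_inj_in_uniq ?uniq_pairs_dep //.
  - exact: splits_uniq.
  - by move=> p; apply: uniq_pairs_dep => // *; [apply: uniq_SP | apply: uniq_Good].
  move=> x y /allpairsPdep [p [st [hp /allpairsPdep [sg [s' [hsg hs' ->]]] ->]]].
  move=> /allpairsPdep [p2 [st2 [hp2 /allpairsPdep [sg2 [s2 [hsg2 hs2 ->]]] ->]]] /= e.
  have [e1 e2] := cat_a_inj (notin_SP (aP p hp) hsg) (notin_SP (aP p2 hp2) hsg2) e.
  move: e1 e2 => /= e1 e2; rewrite -e1 -e2.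
  have -> // : p = p2.
  apply: (splits_eq sC hp hp2) => v.
  by rewrite -(vals_SP hk hsg) e1 (vals_SP hk hsg2).
have hperm : perm_eq (Good k a m.+1 C) (map g L).
  apply: uniq_perm => //; first exact: uniq_Good.
  by move=> s; rewrite (decomp_mem hk).
rewrite (perm_big _ hperm) big_map big_allpairs_dep.
apply: eq_bigr => p _; by rewrite big_allpairs.
Qed.

End Main.

End PartF.

Section PartG.
Local Open Scope ring_scope.

Section Final.
Variables (R : comNzRingType) (k : nat) (hk : (0 < k)%N) (q t u : R).

Let c := stirP k q t u.
Let Qc := egf_add c (egf_const (q - 1)).
Let Tc := egf_add c (egf_const (t - 1)).
Let Uc := egf_add c (egf_const (u - 1)).
Let Ef j := iter j (egf_mul Uc) Tc.

Lemma SP_nil : SP k [::] = [:: [::]].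
Proof. by []. Qed.

Lemma c0 : c 0%N = 1.
Proof. by rewrite /c /stirP /= big_cons big_nil !expr0 !mulr1 addr0. Qed.

Lemma size_mult T : size (mult k T) = (k * size T)%N.
Proof. by rewrite -(count_predT (mult k T)) count_mult count_predT. Qed.

Definition IHn n := forall B, sorted ltn B -> all (fun v => 0 < v)%N B -> (size B <= n)%N ->
  \sum_(s <- SP k B) w q t u s = c (size B).

Lemma block n (IH : IHn n) x y B : sorted ltn B -> all (fun v => (x < v) && (y < v))%N B ->
  (size B <= n)%N ->
  \sum_(sg <- SP k B) pw q t u x (sg ++ [:: y]) = egf_add c (egf_const (f q t u x y - 1)) (size B).
Proof.
case: B => [|b B'] sB hB hn.
  by rewrite SP_nil big_cons big_nil /egf_add /egf_const /= c0 mulr1 addr0 addrC subrK.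
have pB : all (fun v => 0 < v)%N (b :: B').
  by apply/allP => v /(allP hB) /andP[h _]; apply: leq_ltn_trans h.
have -> : egf_add c (egf_const (f q t u x y - 1)) (size (b :: B')) = c (size (b :: B')).
  by rewrite /egf_add /egf_const /= addr0.
rewrite -IH //; apply: eq_big_seq => sg hsg.
have hv := vals_SP hk hsg.
have : size sg = (k * size (b :: B'))%N.
  by move: hsg; rewrite mem_SP => /andP[/perm_size -> _]; rewrite size_mult.
case: sg hsg hv => [|z sg'] hsg hv.
  by rewrite /= => /esym /eqP; rewrite muln_eq0 orbF => /eqP k0; move: hk; rewrite k0.
move=> _.
have hz : z \in b :: B' by rewrite -hv mem_head.
have hl : last z sg' \in b :: B' by rewrite -hv mem_last.
have /andP[xz _] := allP hB z hz; have /andP[_ yl] := allP hB _ hl.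
rewrite w_pw; last by apply/allP => v; rewrite hv => /(allP pB).
rewrite !pw_block //; [exact: (allP pB _ hz) | exact: (allP pB _ hl)].
Qed.

Lemma pw_split x a sg s' :
  pw q t u x ((sg ++ a :: s') ++ [:: 0%N]) = pw q t u x (sg ++ [:: a]) * pw q t u a (s' ++ [:: 0%N]).
Proof. by rewrite -catA cat_cons -cat1s catA pw_cat last_cat. Qed.

Lemma splits_props C p : sorted ltn C -> p \in splits C ->
  [/\ sorted ltn p.1, sorted ltn p.2, {subset p.1 <= C}, {subset p.2 <= C} &
      (size p.1 <= size C)%N /\ (size p.2 <= size C)%N].
Proof.
move=> sC hp; have [h1 h2] := splits_subseq hp.
have st := subseq_sorted ltn_trans.
split.
- by apply: st sC.
- by apply: st sC.
- exact: mem_subseq h1.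
- exact: mem_subseq h2.
- by split; apply: size_subseq.
Qed.

Lemma Ef_sum n (IH : IHn n) j a C : (0 < a)%N -> sorted ltn C -> all (fun v => a < v)%N C ->
  (size C <= n)%N -> \sum_(s <- Good k a j C) pw q t u a (s ++ [:: 0%N]) = Ef j (size C).
Proof.
move=> ha; elim: j C => [|j IHj] C sC aC hn.
  have -> : Good k a 0 C = SP k C by [].
  rewrite (block IH) //; last first.
    by apply/allP => v /(allP aC) h; rewrite h /=; apply: leq_ltn_trans h.
  by rewrite /f ltn0 ha.
rewrite decomp //.
rewrite (eq_big_seq (fun p => Uc (size p.1) * Ef j (size p.2))); last first.
  move=> p hp; have [s1 s2 m1 m2 [z1 z2]] := splits_props sC hp.
  under eq_bigr do under eq_bigr do rewrite pw_split.
  under eq_bigr do rewrite -mulr_sumr.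
  rewrite -mulr_suml (block IH) //; last first.
  - exact: leq_trans z1 hn.
  - by apply/allP => v /m1 /(allP aC) ->.
  rewrite IHj //; last first.
  - exact: leq_trans z2 hn.
  - by apply/allP => v /m2 /(allP aC).
  by rewrite /f ltnn.
by rewrite (splits_sum C (fun i j' => Uc i * Ef j j')) -egf_mulE.
Qed.

Lemma top n (IH : IHn n) b C : (0 < b)%N -> sorted ltn (b :: C) -> size C = n ->
  \sum_(s <- SP k (b :: C)) w q t u s = egf_mul Qc (Ef (k - 1)) n.
Proof.
move=> hb sbC hn.
have sC : sorted ltn C := path_sorted sbC.
have bC : all (fun v => b < v)%N C := order_path_min ltn_trans sbC.
have -> : SP k (b :: C) = Good k b k.-1.+1 C by rewrite prednK.
rewrite (eq_big_seq (fun s => pw q t u 0 (s ++ [:: 0%N]))); last first.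
  move=> s hs; have hv := vals_Good hk hs.
  have : size s = (k + k * size C)%N.
    by move: hs; rewrite mem_Good => /andP[/perm_size -> _]; rewrite size_cat size_mult size_nseq prednK.
  case: s hs hv => [|z s'] hs hv; first by case: k hk.
  move=> _; rewrite w_pw //; apply/allP => v /hv [->//|/(allP bC)]; exact: leq_ltn_trans.
rewrite decomp //.
rewrite (eq_big_seq (fun p => Qc (size p.1) * Ef k.-1 (size p.2))); last first.
  move=> p hp; have [s1 s2 m1 m2 [z1 z2]] := splits_props sC hp.
  under eq_bigr do under eq_bigr do rewrite pw_split.
  under eq_bigr do rewrite -mulr_sumr.
  rewrite -mulr_suml (block IH) //; last first.
  - by rewrite -hn.
  - by apply/allP => v /m1 /(allP bC) h; rewrite h andbT; apply: leq_ltn_trans h.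
  rewrite (Ef_sum IH) //; last first.
  - by rewrite -hn.
  - by apply/allP => v /m2 /(allP bC).
  by rewrite /f hb.
by rewrite (splits_sum C (fun i j' => Qc i * Ef k.-1 j')) -egf_mulE subn1 hn.
Qed.

Lemma allB n : IHn n.
Proof.
elim: n => [|n IH] B sB pB.
  by rewrite leqn0 => /nilP ->; rewrite SP_nil big_cons big_nil c0 /w /= !expr0 !mulr1 addr0.
rewrite leq_eqVlt => /orP[/eqP hs|]; last by apply: IH.
case: B sB pB hs => [|b C] // sB pB [hs].
rewrite (top IH) //; last by case/andP: pB.
rewrite /= hs.
have -> : c n.+1 = \sum_(s <- SP k (1 :: iota 2 n)) w q t u s by [].
by rewrite (top IH) // ?size_iota // (iota_ltn_sorted 1 n.+1).
Qed.

Lemma main_eq : egf_deriv c =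
    egf_mul Qc (egf_mul Tc (egf_pow Uc (k - 1))).
Proof.
apply: functional_extensionality => n; rewrite /egf_deriv.
have -> : c n.+1 = \sum_(s <- SP k (1 :: iota 2 n)) w q t u s by [].
rewrite (top (@allB n)) // ?size_iota // ?(iota_ltn_sorted 1 n.+1) //.
by rewrite /Ef iter_mul_comm.
Qed.

End Final.


End PartG.

Unset Implicit Arguments.
Local Open Scope ring_scope.

Theorem theorem4p7 (R : comNzRingType) (k : nat) (hk : (1 <= k)%N) (q t u : R) :
  let P := stirP k q t u in
  egf_deriv P =
    egf_mul (egf_add P (egf_const (q - 1)))
      (egf_mul (egf_add P (egf_const (t - 1)))
               (egf_pow (egf_add P (egf_const (u - 1))) (k - 1)))
  /\ P 0%N = 1.
Proof.
move=> P; split; first exact: main_eq.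
exact: c0.
Qed.
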